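(* Let $n_0,\dots,n_g\ge1$ and let $K\subseteq\mathbb Z^{g+1}$ be the subgroup generated by $(1,1,\dots,1)$ and the vectors $n_0e_0-n_\alpha e_\alpha$ for $\alpha=1,\dots,g$ (where $e_\alpha$ is the $\alpha$-th standard basis vector, indices from $0$). Then there is a group isomorphism $\mathbb Z^{g+1}/K\cong\mathrm{Jac}(B_{n_0,\dots,n_g})$ sending the coset of $(a_0,\dots,a_g)$ to the class of $\sum_{\alpha=0}^g a_\alpha(v_{\alpha,1}-v_{0,0})$; in particular, when $0\le a_\alpha\le n_\alpha$ for all $\alpha$, the coset of $(a_0,\dots,a_g)$ corresponds to the class of $\sum_{\alpha=0}^g(v_{\alpha,a_\alpha}-v_{0,0})$.
   Context: A graph is a finite, connected, loopless multigraph (parallel edges allowed). A divisor is an element of the free abelian group on $V(G)$; linear equivalence is generated by chip-firing (firing $w$ subtracts $\mathrm{val}(w)$ chips from $w$ and adds to each other vertex the number of edges joining it to $w$). $\mathrm{Jac}(G)$ is the group of linear equivalence classes of degree-$0$ divisors. For positive integers $n_0,\dots,n_g$, the banana graph $B_{n_0,\dots,n_g}$ is obtained by joining two vertices by $g+1$ internally disjoint paths of lengths $n_0,\dots,n_g$; it has genus $g$. Its vertices are labelled $v_{\alpha,i}$ ($0\le\alpha\le g$, $0\le i\le n_\alpha$), with $v_{\alpha,i}$ the vertex at distance $i$ from $v_{0,0}$ along the $\alpha$-th path; $v_{\alpha,0}=v_{0,0}$ and $v_{\alpha,n_\alpha}=v_{0,n_0}$ for all $\alpha$, other labels unique. *)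

(* Defs.v *)
From HB Require Import structures.
From mathcomp Require Import all_boot all_order all_algebra.
Set Implicit Arguments. Unset Strict Implicit. Unset Printing Implicit Defensive.
Import Order.TTheory GRing.Theory Num.Theory.
Local Open Scope ring_scope.

(* A multigraph on a finite vertex type V is given by a symmetric edge
   multiplicity function m : V -> V -> nat (m u w = number of edges
   joining u and w).  Divisors are functions V -> int. *)
Section ChipFiring.
Variables (V : finType) (m : V -> V -> nat).

Definition valence (w : V) : nat := (\sum_(u : V) m w u)%N.

Definition fire (w : V) (u : V) : int :=
  if u == w then - (valence w)%:Z else (m u w)%:Z.

Definition deg (D : V -> int) : int := \sum_(u : V) D u.

(* D1 and D2 are linearly equivalent: D1 is obtained from D2 by a
   sequence of firings and reverse firings, i.e. D1 - D2 is an integer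
   combination of firing vectors. *)
Definition lin_equiv (D1 D2 : V -> int) : Prop :=
  exists c : V -> int, forall u, D1 u - D2 u = \sum_(w : V) c w * fire w u.

End ChipFiring.

Section Banana.
Variables (g : nat) (n : 'I_g.+1 -> nat).

Definition bmax : nat := (\max_(a < g.+1) n a)%N.

(* raw labels (alpha, i); the vertex v_{alpha,i} with 0 <= i <= n alpha
   has canonical label: (0,0) if i = 0, (0,n_0) if i = n_alpha, else (alpha,i). *)
Definition vlab (a : 'I_g.+1) (i : nat) : 'I_g.+1 * nat :=
  if i == 0%N then (ord0, 0%N)
  else if i == n a then (ord0, n ord0) else (a, i).

Definition bvalid (x : 'I_g.+1 * 'I_bmax.+1) : bool :=
  (x.2 <= n x.1)%N && ((x.1 == ord0) || (0 < x.2 < n x.1)%N).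

Definition bvert : finType := {x : 'I_g.+1 * 'I_bmax.+1 | bvalid x}.

Definition bkey (x : bvert) : 'I_g.+1 * nat := ((val x).1, nat_of_ord (val x).2).

(* number of edges joining x and y: the edges of path alpha join
   v_{alpha,i} and v_{alpha,i+1} for 0 <= i < n_alpha. *)
Definition bmult (x y : bvert) : nat :=
  (\sum_(a < g.+1) \sum_(i < n a)
     (((bkey x == vlab a i) && (bkey y == vlab a i.+1)) ||
      ((bkey y == vlab a i) && (bkey x == vlab a i.+1))))%N.

Definition pt (a : 'I_g.+1) (i : nat) (u : bvert) : int :=
  (bkey u == vlab a i)%:Z.

Definition phi (a : 'I_g.+1 -> int) (u : bvert) : int :=
  \sum_(b < g.+1) a b * (pt b 1 u - pt ord0 0 u).

Definition inK (a : 'I_g.+1 -> int) : Prop :=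
  exists (t : int) (c : 'I_g.+1 -> int),
    forall b : 'I_g.+1,
      a b = t + (if b == ord0
                 then \sum_(b' < g.+1 | b' != ord0) c b' * (n ord0)%:Z
                 else - (c b * (n b)%:Z)).

End Banana.

(* Main.v *)
Require Import Defs.
From HB Require Import structures.
From mathcomp Require Import all_boot all_order all_algebra.
From mathcomp Require Import ring zify.
Set Implicit Arguments. Unset Strict Implicit. Unset Printing Implicit Defensive.
Import Order.TTheory GRing.Theory Num.Theory.
Local Open Scope ring_scope.

Section Prin.
Variables (V : finType) (m : V -> V -> nat).

Definition prin (D : V -> int) : Prop :=
  exists c : V -> int, forall u, D u = \sum_(w : V) c w * fire m w u.

Lemma prin_ext D D' : prin D -> (forall u, D u = D' u) -> prin D'.
Proof. by move=> [c hc] e; exists c => u; rewrite -e. Qed.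

Lemma prin0 : prin (fun _ => 0).
Proof. by exists (fun _ => 0) => u; rewrite big1 // => w _; rewrite mul0r. Qed.

Lemma prinD D1 D2 : prin D1 -> prin D2 -> prin (fun u => D1 u + D2 u).
Proof.
move=> [c1 h1] [c2 h2]; exists (fun w => c1 w + c2 w) => u.
by rewrite h1 h2 -big_split /=; apply: eq_bigr => w _; rewrite mulrDl.
Qed.

Lemma prinZ k D : prin D -> prin (fun u => k * D u).
Proof.
move=> [c h]; exists (fun w => k * c w) => u.
by rewrite h mulr_sumr; apply: eq_bigr => w _; rewrite mulrA.
Qed.

Lemma prinN D : prin D -> prin (fun u => - D u).
Proof. move=> h; apply: prin_ext (prinZ (-1) h) _ => u; by rewrite mulN1r. Qed.

Lemma prinB D1 D2 : prin D1 -> prin D2 -> prin (fun u => D1 u - D2 u).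
Proof. by move=> h1 h2; apply: prinD h1 (prinN h2). Qed.

Lemma prin_sum (I : Type) (r : seq I) (F : I -> V -> int) :
  (forall i, prin (F i)) -> prin (fun u => \sum_(i <- r) F i u).
Proof.
move=> hF; elim: r => [|i r IH].
  by apply: prin_ext prin0 _ => u; rewrite big_nil.
by apply: prin_ext (prinD (hF i) IH) _ => u; rewrite big_cons.
Qed.

Lemma prin_fire w : prin (fire m w).
Proof.
exists (fun w' => (w' == w)%:Z) => u.
rewrite (bigD1 w) //= eqxx mul1r big1 ?addr0 // => w' /negbTE ->.
by rewrite mul0r.
Qed.

Lemma lap_formula (c : V -> int) u : m u u = 0%N ->
  \sum_(w : V) c w * fire m w u =
  \sum_(w : V) c w * (m u w)%:Z - c u * (valence m u)%:Z.
Proof.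
move=> huu; rewrite (bigD1 u) //= [X in _ = X - _](bigD1 u) //= huu mulr0 add0r.
rewrite /fire eqxx addrC mulrN; congr (_ - _); apply: eq_bigr => w hw.
by rewrite eq_sym (negbTE hw).
Qed.

End Prin.
Section B.
Variables (g : nat) (n : 'I_g.+1 -> nat).
Hypothesis hn : forall a, (0 < n a)%N.

Local Notation V := (bvert n).

Lemma K0 a k : (vlab n a k == (ord0, 0%N)) = (k == 0%N).
Proof.
rewrite /vlab; have [e|hk] := eqVneq k 0%N; first by rewrite eqxx.
have [_|_] := eqVneq k (n a).
  by rewrite xpair_eqE eqxx /=; have := hn ord0; case: (n ord0).
by rewrite xpair_eqE; case: k hk => //= k _; rewrite andbF.
Qed.

Lemma K1 a k b j : (0 < j < n b)%N -> (vlab n a k == (b, j)) = (a == b) && (k == j).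
Proof.
move=> /andP [hj0 hjn]; rewrite /vlab.
have [e|hk] := eqVneq k 0%N.
  rewrite e xpair_eqE; case: j hj0 hjn => // j _ _; by rewrite !andbF.
have [e|hka] := eqVneq k (n a); last by rewrite xpair_eqE.
rewrite xpair_eqE e.
have h1 : forall c : 'I_g.+1, (c == b) && (n c == j) = false.
  move=> c; apply/negbTE/nandP; have [->|] := eqVneq c b; last by left.
  by right; rewrite eq_sym neq_ltn hjn.
by rewrite !h1.
Qed.

Lemma vlab_ok a k : (k <= n a)%N ->
  ((vlab n a k).2 <= n (vlab n a k).1)%N &&
  (((vlab n a k).1 == ord0) || (0 < (vlab n a k).2 < n (vlab n a k).1)%N).
Proof.
move=> hk; rewrite /vlab; have [_|hk0] := eqVneq k 0%N => //=.
have [_|hka] := eqVneq k (n a) => /=; first by rewrite leqnn.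
by rewrite hk /= lt0n hk0 ltn_neqAle hka hk orbT.
Qed.

Lemma bkey_inj (x y : V) : bkey x = bkey y -> x = y.
Proof.
case: x => [[x1 x2] hx]; case: y => [[y1 y2] hy] [e1 e2] /=.
apply: val_inj => /=; congr (_, _) => //; exact: ord_inj.
Qed.

Lemma vert_ex a k : (k <= n a)%N -> exists x : V, bkey x = vlab n a k.
Proof.
move=> hk; have h := vlab_ok hk.
have hlt : ((vlab n a k).2 < (bmax n).+1)%N.
  rewrite ltnS; apply: (@leq_trans (n (vlab n a k).1)); first by case/andP: h.
  by rewrite /bmax; exact: leq_bigmax.
move: hlt h; case: (vlab n a k) => l1 l2 hlt h.
by exists (exist _ (l1, Ordinal hlt) h).
Qed.

Lemma bkey_valid (x : V) :
  ((bkey x).2 <= n (bkey x).1)%N &&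
  (((bkey x).1 == ord0) || (0 < (bkey x).2 < n (bkey x).1)%N).
Proof. by case: x => [[x1 x2] hx]. Qed.

Definition ptn a i (u : V) : nat := (bkey u == vlab n a i).

Lemma sum_key (F : V -> int) (x : V) L : bkey x = L ->
  \sum_(w : V) F w * (bkey w == L)%:Z = F x.
Proof.
move=> hx; rewrite (bigD1 x) //= hx eqxx mulr1 big1 ?addr0 // => w hw.
case: (bkey w =P L) => [e|]; last by rewrite mulr0.
by case/eqP: hw; apply: bkey_inj; rewrite e.
Qed.

Lemma sum_key_nat (x : V) L : bkey x = L -> (\sum_(w : V) (bkey w == L) = 1)%N.
Proof.
move=> hx; rewrite (bigD1 x) //= hx eqxx big1 ?addn0 // => w hw.
case: (bkey w =P L) => [e|] //.
by case/eqP: hw; apply: bkey_inj; rewrite e.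
Qed.

Lemma sum_ptn a i : (i <= n a)%N -> (\sum_(w : V) ptn a i w = 1)%N.
Proof. by move=> /vert_ex [x hx]; exact: sum_key_nat hx. Qed.

Lemma sumS N (k : nat) (f : nat -> nat) :
  (\sum_(i < N) (i == k :> nat) * f i = (k < N) * f k)%N.
Proof.
elim: N => [|N IH]; first by rewrite big_ord0.
rewrite big_ord_recr /= IH ltnS.
by case: (ltngtP k N) => [h|h|->]; rewrite ?eqxx /= ?mul0n ?mul1n ?addn0.
Qed.

Lemma sumI1 N (F : 'I_N -> nat) (b : 'I_N) :
  (\sum_(a < N) (a == b) * F a = F b)%N.
Proof.
rewrite (bigD1 b) //= eqxx mul1n big1 ?addn0 // => a /negbTE ->.
by rewrite mul0n.
Qed.

Lemma bmultC (x y : V) : @bmult g n x y = @bmult g n y x.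
Proof.
by rewrite /bmult; apply: eq_bigr => a _; apply: eq_bigr => i _; rewrite orbC.
Qed.

Lemma N0 (x w : V) : bkey x = (ord0, 0%N) ->
  @bmult g n x w = (\sum_(a < g.+1) ptn a 1 w)%N.
Proof.
move=> hx; rewrite /bmult; apply: eq_bigr => a _.
rewrite hx.
transitivity (\sum_(i < n a) (i == 0%N :> nat) * (bkey w == vlab n a 1))%N.
  apply: eq_bigr => i _; rewrite ![(ord0, 0%N) == _]eq_sym !K0 /= andbF orbF.
  by have [e|ne] := eqVneq (nat_of_ord i) 0%N; [rewrite e|]; rewrite /= ?mul1n ?mul0n.
by rewrite (sumS (n a) 0 (fun _ => nat_of_bool (bkey w == vlab n a 1))) hn mul1n.
Qed.

Lemma Nint (x w : V) b j : (0 < j < n b)%N -> bkey x = (b, j) ->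
  @bmult g n x w = (ptn b j.+1 w + ptn b j.-1 w)%N.
Proof.
move=> hj hx; rewrite /bmult.
transitivity (\sum_(a < g.+1) (a == b) *
   (\sum_(i < n a) ((i == j :> nat) * (bkey w == vlab n a i.+1)
                   + (i == j.-1 :> nat) * (bkey w == vlab n a i))))%N; last first.
  rewrite sumI1 big_split /= (sumS _ _ (fun i => nat_of_bool (bkey w == vlab n b i.+1))).
  rewrite (sumS _ _ (fun i => nat_of_bool (bkey w == vlab n b i))).
  case/andP: hj => hj0 hjn.
  by rewrite hjn (leq_ltn_trans (leq_pred j) hjn) !mul1n.
have ej : forall i : nat, (i.+1 == j) = (i == j.-1).
  by move=> i; case/andP: hj; case: (j) => // k _ _.
apply: eq_bigr => a _; rewrite hx; have [eab|nab] := eqVneq a b.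
  subst b; rewrite mul1n; apply: eq_bigr => i _.
  rewrite ![(a, j) == _]eq_sym !K1 // eqxx /= ej.
  case: (nat_of_ord i =P j) => [ei|ei]; case: (nat_of_ord i =P j.-1) => [ei'|ei'] //=;
    rewrite ?andbF ?orbF ?andbT ?addn0 ?add0n ?mul1n ?mul0n //.
  exfalso; case/andP: hj => hj0 _; move: ei'; rewrite ei; case: (j) hj0 => // k _ /=; lia.
rewrite /= mul0n big1 // => i _.
by rewrite ![(b, j) == _]eq_sym !K1 // (negbTE nab) /= andbF.
Qed.


Lemma bkey_eq (u v : V) : (bkey u == bkey v) = (u == v).
Proof. by apply/eqP/eqP => [/bkey_inj|->]. Qed.

Lemma pt_vert a i (x u : V) : bkey x = vlab n a i -> pt a i u = (u == x)%:Z.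
Proof. by move=> hx; rewrite /pt -hx bkey_eq. Qed.

Lemma PoszS (I : Type) (r : seq I) (F : I -> nat) :
  ((\sum_(i <- r) F i)%N)%:Z = \sum_(i <- r) (F i)%:Z.
Proof. exact: (big_morph _ PoszD (erefl _)). Qed.

Lemma vlabn a : vlab n a (n a) = (ord0, n ord0).
Proof. by rewrite /vlab eqxx; have := hn a; case: (n a). Qed.

Lemma val00 (x : V) : bkey x = (ord0, 0%N) -> valence (@bmult g n) x = g.+1.
Proof.
move=> hx; rewrite /valence (eq_bigr _ (fun w _ => N0 w hx)) exchange_big /=.
rewrite (eq_bigr (fun _ => 1%N)) ?sum_nat_const ?card_ord ?muln1 // => b _.
exact: sum_ptn.
Qed.

Lemma valint (x : V) b j : (0 < j < n b)%N -> bkey x = (b, j) ->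
  valence (@bmult g n) x = 2.
Proof.
move=> hj hx; rewrite /valence (eq_bigr _ (fun w _ => Nint w hj hx)) big_split /=.
by case/andP: hj => hj0 hjn; rewrite !sum_ptn // (leq_trans (leq_pred j) (ltnW hjn)).
Qed.

Lemma F1 : prin (@bmult g n)
  (fun u => \sum_(b < g.+1) (pt b 1 u - pt ord0 0 u)).
Proof.
have [x hx] := @vert_ex ord0 0 (leq0n _).
apply: prin_ext (prin_fire _ x) _ => u; rewrite /fire.
have [->|hux] := eqVneq u x.
  rewrite (val00 hx) (pt_vert _ hx) eqxx.
  rewrite (eq_bigr (fun _ => -1)) ?sumr_const ?card_ord; last first.
    by move=> b _; rewrite /pt hx [(ord0, 0%N) == _]eq_sym K0.
  by rewrite mulNrn natz.
rewrite bmultC (N0 u hx) PoszS; apply: eq_bigr => b _.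
by rewrite (pt_vert _ hx) (negbTE hux) subr0.
Qed.

Lemma F2 b j : (0 < j < n b)%N -> prin (@bmult g n)
  (fun u => (pt b j.+1 u - pt b j u) - (pt b j u - pt b j.-1 u)).
Proof.
move=> hj; have hjn : (j <= n b)%N by case/andP: hj => _ /ltnW.
have [x hx] := @vert_ex b j hjn.
have hx' : bkey x = (b, j).
  by rewrite hx /vlab; case/andP: hj; case: (j =P 0%N) => [->|_] //;
     case: (j =P n b) => [->|_] //; rewrite ltnn.
apply: prin_ext (prin_fire _ x) _ => u; rewrite /fire.
have [->|hux] := eqVneq u x.
  rewrite (valint hj hx') (pt_vert _ hx) eqxx /pt hx' ![(b, j) == _]eq_sym !K1 // eqxx /=.
  have -> : (j.+1 == j) = false by apply/negbTE; rewrite neq_ltn ltnSn orbT.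
  have -> : (j.-1 == j) = false.
    by case/andP: hj; case: (j) => // k _ _ /=; apply/negbTE; rewrite neq_ltn ltnSn.
  by [].
rewrite bmultC (Nint u hj hx') (pt_vert _ hx) (negbTE hux) /pt PoszD.
by rewrite subr0 sub0r opprK addrC.
Qed.

Lemma Qlem b i : (i.+1 <= n b)%N -> prin (@bmult g n)
  (fun u => (pt b i.+1 u - pt b i u) - (pt b 1 u - pt b 0 u)).
Proof.
elim: i => [|i IH] hi.
  by apply: prin_ext (prin0 _) _ => u; rewrite subrr.
have hj : (0 < i.+1 < n b)%N by [].
apply: prin_ext (prinD (F2 hj) (IH (ltnW hi))) _ => u /=.
by rewrite addrA subrK.
Qed.

Lemma P3 b i : (i <= n b)%N -> prin (@bmult g n)
  (fun u => (pt b i u - pt ord0 0 u) - i%:Z * (pt b 1 u - pt ord0 0 u)).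
Proof.
elim: i => [|i IH] hi.
  by apply: prin_ext (prin0 _) _ => u; rewrite mul0r subr0 /pt /= subrr.
apply: prin_ext (prinD (IH (ltnW hi)) (Qlem hi)) _ => u /=.
have -> : pt b 0 u = pt ord0 0 u by [].
ring.
Qed.

Lemma part3 (a : 'I_g.+1 -> nat) : (forall b, (a b <= n b)%N) ->
  lin_equiv (@bmult g n) (@phi g n (fun b => (a b)%:Z))
     (fun u => \sum_(b < g.+1) (@pt g n b (a b) u - @pt g n ord0 0 u)).
Proof.
move=> ha.
have := prinN (prin_sum (index_enum 'I_g.+1) (fun b => P3 (ha b))).
move=> [c hc]; exists c => u; rewrite -hc /phi -sumrB -sumrN.
by apply: eq_bigr => b _; ring.
Qed.

Lemma YY b : prin (@bmult g n) (fun u =>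
   (n ord0)%:Z * (pt ord0 1 u - pt ord0 0 u) - (n b)%:Z * (pt b 1 u - pt ord0 0 u)).
Proof.
apply: prin_ext (prinB (P3 (leqnn (n b))) (P3 (leqnn (n ord0)))) _ => u /=.
have -> : pt b (n b) u = pt ord0 (n ord0) u by rewrite /pt !vlabn.
ring.
Qed.

Lemma part1a (a : 'I_g.+1 -> int) : inK n a ->
  lin_equiv (@bmult g n) (@phi g n a) (fun _ => 0).
Proof.
move=> [t [cc ha]].
pose Y (b : 'I_g.+1) (u : V) := pt b 1 u - pt ord0 0 u.
have := prinD (prinZ t F1) (prin_sum (index_enum 'I_g.+1)
   (fun b => prinZ ((b != ord0)%:Z * cc b) (YY b))).
move=> [c hc]; exists c => u; rewrite -hc subr0 /phi /=.
rewrite (eq_bigr (fun b => t * Y b u + (if b == ord0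
                 then \sum_(b' < g.+1 | b' != ord0) cc b' * (n ord0)%:Z
                 else - (cc b * (n b)%:Z)) * Y b u)); last first.
  by move=> b _; rewrite ha mulrDl.
rewrite big_split /= -mulr_sumr; congr (_ + _).
rewrite (bigD1 ord0) //= [in RHS](bigD1 ord0) //= !mul0r add0r.
rewrite mulr_suml -big_split /=; apply: eq_bigr => b hb.
by rewrite (negbTE hb) /Y /=; ring.
Qed.

Lemma key_vlab (x : V) : bkey x = vlab n (bkey x).1 (bkey x).2.
Proof.
have := bkey_valid x; case: (bkey x) => b j /= /andP [hjn hv].
rewrite /vlab; have [ej|nj] := eqVneq j 0%N.
  by move: hv; rewrite ej ltnn orbF => /eqP ->.
have [ej|nj'] := eqVneq j (n b) => //.
by move: hv; rewrite ej ltnn andbF orbF => /eqP ->.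
Qed.

Lemma part2 (D : V -> int) : deg D = 0 ->
  exists a : 'I_g.+1 -> int, lin_equiv (@bmult g n) D (@phi g n a).
Proof.
move=> hD.
pose a b := \sum_(w : V) D w * ((bkey w).1 == b)%:Z * ((bkey w).2)%:Z.
exists a.
have hv : forall w : V, ((bkey w).2 <= n (bkey w).1)%N.
  by move=> w; case/andP: (bkey_valid w).
have := prin_sum (index_enum V) (fun w => prinZ (D w) (P3 (hv w))).
move=> [c hc]; exists c => u; rewrite -hc.
pose Y (b : 'I_g.+1) (u : V) := pt b 1 u - pt ord0 0 u.
have e1 : \sum_(w : V) D w * pt (bkey w).1 (bkey w).2 u = D u.
  rewrite (bigD1 u) //= /pt -key_vlab eqxx mulr1 big1 ?addr0 // => w hw.
  by rewrite -key_vlab bkey_eq eq_sym (negbTE hw) mulr0.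
have e2 : \sum_(w : V) D w * pt ord0 0 u = 0.
  by move: hD; rewrite /deg -mulr_suml => ->; rewrite mul0r.
have e3 : \sum_(w : V) D w * ((bkey w).2)%:Z * Y (bkey w).1 u = phi a u.
  rewrite /phi /a; under [RHS]eq_bigr do rewrite mulr_suml.
  rewrite exchange_big /=; apply: eq_bigr => w _.
  rewrite (bigD1 (bkey w).1) //= eqxx mulr1 big1 ?addr0 // => b hb.
  by rewrite eq_sym (negbTE hb) /= mulr0 !mul0r.
rewrite (eq_bigr (fun w => D w * pt (bkey w).1 (bkey w).2 u - D w * pt ord0 0 u
    - D w * ((bkey w).2)%:Z * Y (bkey w).1 u)); last by move=> w _; rewrite /Y; ring.
by rewrite !sumrB e1 e2 e3 subr0.
Qed.

Lemma vert_int b j : (0 < j < n b)%N -> exists x : V, bkey x = (b, j).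
Proof.
move=> hj; have hjn : (j <= n b)%N by case/andP: hj => _ /ltnW.
have [x hx] := @vert_ex b j hjn; exists x.
by rewrite hx /vlab; case/andP: hj; case: (j =P 0%N) => [->|_] //;
     case: (j =P n b) => [->|_] //; rewrite ltnn.
Qed.

Section Part1b.
Variables (a : 'I_g.+1 -> int) (c : V -> int).
Hypothesis hc : forall u, phi a u - 0 = \sum_(w : V) c w * fire (@bmult g n) w u.

Definition cv b k := \sum_(w : V) c w * pt b k w.

Lemma cv_vert b k (x : V) : bkey x = vlab n b k -> cv b k = c x.
Proof.
move=> hx; rewrite /cv (eq_bigr (fun w => c w * (w == x)%:Z)).
  rewrite (bigD1 x) //= eqxx mulr1 big1 ?addr0 // => w /negbTE ->.
  by rewrite mulr0.
by move=> w _; rewrite (pt_vert _ hx).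
Qed.

Lemma Eint b j : (0 < j < n b)%N ->
  a b * (j == 1%N)%:Z = cv b j.+1 + cv b j.-1 - 2%:Z * cv b j.
Proof.
move=> hj; have [x hx] := vert_int hj.
have hxx : @bmult g n x x = 0%N.
  rewrite (Nint x hj hx) /ptn hx ![(b, j) == _]eq_sym !K1 // eqxx /=.
  have -> : (j.+1 == j) = false by apply/negbTE; rewrite neq_ltn ltnSn orbT.
  suff -> : (j.-1 == j) = false by [].
  by case/andP: hj; case: (j) => // k _ _ /=; apply/negbTE; rewrite neq_ltn ltnSn.
have := hc x; rewrite subr0 lap_formula // (valint hj hx).
have hxv : bkey x = vlab n b j by rewrite hx /vlab; case/andP: hj;
  case: (j =P 0%N) => [->|_] //; case: (j =P n b) => [->|_] //; rewrite ltnn.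
rewrite -(cv_vert hxv).
rewrite (eq_bigr (fun w => c w * pt b j.+1 w + c w * pt b j.-1 w)); last first.
  by move=> w _; rewrite (Nint w hj hx) PoszD mulrDr addrC.
rewrite big_split /= -/(cv b j.+1) -/(cv b j.-1) => e; rewrite [2%:Z * _]mulrC -e.
rewrite /phi (bigD1 b) //= big1 ?addr0.
  rewrite /pt hx ![(b, j) == _]eq_sym !K1 // eqxx /=.
  by case/andP: hj; case: (j) => // k _ _ /=; rewrite andbF subr0 eq_sym.
move=> b' hb'; rewrite /pt hx ![(b, j) == _]eq_sym !K1 // (negbTE hb') /=.
case/andP: hj; case: (j) => // k _ _ /=.
by rewrite andbF subr0 mulr0.
Qed.

Lemma E0 : - \sum_(b < g.+1) a b = \sum_(b < g.+1) cv b 1 - cv ord0 0 * (g.+1)%:Z.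
Proof.
have [x hx] := @vert_ex ord0 0 (leq0n _).
have hxx : @bmult g n x x = 0%N.
  rewrite (N0 x hx) big1 // => b _; by rewrite /ptn hx [(ord0, 0%N) == _]eq_sym K0.
have := hc x; rewrite subr0 lap_formula // (val00 hx) -(cv_vert hx).
rewrite (eq_bigr (fun w => \sum_(b < g.+1) c w * pt b 1 w)); last first.
  by move=> w _; rewrite (N0 w hx) PoszS mulr_sumr.
rewrite exchange_big /= => <-.
rewrite /phi -sumrN; apply: eq_bigr => b _.
by rewrite /pt hx [(ord0, 0%N) == _]eq_sym K0 /=; lia.
Qed.

Lemma Qrec b i : (i.+1 <= n b)%N ->
  cv b i.+1 - cv b i = (cv b 1 - cv b 0) + (i != 0%N)%:Z * a b.
Proof.
elim: i => [|i IH] hi; first by rewrite /= mul0r addr0.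
have hj : (0 < i.+1 < n b)%N by [].
have := Eint hj; have := IH (ltnW hi) => /=.
have [->|_] /= := eqVneq i 0%N; lia.
Qed.

Lemma Rrec b i : (i.+1 <= n b)%N ->
  cv b i.+1 = cv b 0 + (i.+1)%:Z * (cv b 1 - cv b 0) + i%:Z * a b.
Proof.
elim: i => [|i IH] hi; first by rewrite mul0r addr0 mul1r addrC subrK.
have := Qrec hi => /= e.
have -> : cv b i.+2 = cv b i.+1 + (cv b 1 - cv b 0) + a b.
  lia.
rewrite (IH (ltnW hi)); ring.
Qed.

Lemma part1b : inK n a.
Proof.
pose d (b : 'I_g.+1) : int := cv b 1 - cv b 0.
pose De : int := cv ord0 (n ord0) - cv ord0 0.
have hDe : forall b, De = (n b)%:Z * d b + ((n b).-1)%:Z * a b.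
  move=> b; have := hn b; case hnb: (n b) => [|k] // _.
  have h := @Rrec b k; rewrite -hnb in h; have := h (leqnn _).
  have -> : cv b (n b) = cv ord0 (n ord0) by rewrite /cv /pt !vlabn.
  rewrite hnb /De => ->; have -> : cv b 0 = cv ord0 0 by [].
  rewrite /d; ring.
have hsum : \sum_(b < g.+1) (d b + a b) = 0.
  rewrite big_split /= /d sumrB.
  have -> : \sum_(b < g.+1) cv b 0 = cv ord0 0 * (g.+1)%:Z.
    by rewrite (eq_bigr (fun _ => cv ord0 0)) // sumr_const card_ord -mulr_natr natz.
  by rewrite -E0 addrC subrr.
clearbody d De.
exists (- De), (fun b => - (d b + a b)) => b.
have [->|nb] := eqVneq b ord0.
  rewrite (hDe ord0).
  have -> : \sum_(b' < g.+1 | b' != ord0) - (d b' + a b') * (n ord0)%:Z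
            = (d ord0 + a ord0) * (n ord0)%:Z.
    rewrite -mulr_suml sumrN; congr (_ * _).
    move: hsum; rewrite (bigD1 ord0) //= => h.
    by apply/esym/eqP; rewrite -addr_eq0 h.
  move: (hn ord0); case: (n ord0) => // k _ /=; ring.
rewrite (hDe b); move: (hn b); case: (n b) => // k _ /=; ring.
Qed.

End Part1b.
End B.

Theorem mainTheorem13 (g : nat) (n : 'I_g.+1 -> nat)
  (hn : forall a, (0 < n a)%N) :
  [/\ forall a : 'I_g.+1 -> int,
        @inK g n a <-> lin_equiv (@bmult g n) (@phi g n a) (fun _ => 0),
      forall D : @bvert g n -> int, deg D = 0 ->
        exists a : 'I_g.+1 -> int, lin_equiv (@bmult g n) D (@phi g n a)
    & forall a : 'I_g.+1 -> nat, (forall b, a b <= n b)%N ->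
        lin_equiv (@bmult g n) (@phi g n (fun b => (a b)%:Z))
          (fun u => \sum_(b < g.+1) (@pt g n b (a b) u - @pt g n ord0 0 u))].
Proof.
split.
- move=> a; split; first by move=> h; exact: (part1a hn h).
  by move=> [c hc]; apply: (@part1b g n hn a c) => u; rewrite hc.
- by move=> D hD; exact: part2 hD.
- by move=> a ha; exact: part3 ha.
Qed.
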